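(* Let $k,n$ be integers with $0<k\leqslant n<2k$, and set $m=2k$. Then $\alpha(2k,n,k)=\frac{1}{2}\binom{2k}{k}=h(2k,n,k)$.
   Context: For positive integers $a\leqslant b$, $[a,b]=\{a,a+1,\dots,b\}$ and $[a]=[1,a]$; $\binom{X}{k}$ denotes the family of all $k$-subsets of a set $X$. A family of sets is intersecting if no two of its members are disjoint. For integers $0<k\leqslant n<2k\leqslant m$, an $(m,n,k)$-intersecting family is an intersecting family $\mathcal{F}$ with $\binom{[n]}{k}\subseteq\mathcal{F}\subseteq\binom{[m]}{k}$, and $\alpha(m,n,k)$ is the maximum cardinality of an $(m,n,k)$-intersecting family. Define $h(m,n,k)=\binom{n}{k}+\sum_{i=1}^{2k-n-1}\binom{n-1}{k-i-1}\binom{m-n}{i}$. *)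

(* Defs.v *)
From mathcomp Require Import all_boot.
Set Implicit Arguments. Unset Strict Implicit. Unset Printing Implicit Defensive.

(* Ground set [m] = {1,...,m} is modelled by 'I_m = {0,...,m-1} via i |-> i+1;
   [n] then corresponds to the ordinals i with i < n. *)

Definition intersecting (T : finType) (F : {set {set T}}) : bool :=
  [forall A in F, forall B in F, A :&: B != set0].

Definition mnk_intersecting (m n k : nat) (F : {set {set 'I_m}}) : bool :=
  [&& intersecting F,
      [forall A : {set 'I_m},
         ((A \subset [set i : 'I_m | i < n]) && (#|A| == k)) ==> (A \in F)]
    & [forall A in F, #|A| == k]].

Definition alpha (m n k : nat) : nat :=
  \max_(F : {set {set 'I_m}} | mnk_intersecting n k F) #|F|.

(* h(m,n,k) = C(n,k) + sum_{i=1}^{2k-n-1} C(n-1,k-i-1) C(m-n,i);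
   the binomial C(n-1, k-i-1) is taken to be 0 when k-i-1 < 0. *)
Definition h (m n k : nat) : nat :=
  'C(n, k) + \sum_(1 <= i < (2 * k - n - 1).+1)
               (if i < k then 'C(n - 1, k - i - 1) else 0) * 'C(m - n, i).

(* Main.v *)
Require Import Defs.
From mathcomp Require Import all_boot zify.

Lemma binC k : 'C(2*k.+1, k.+1) = 2 * 'C((2*k).+1, k).
Proof.
have -> : 2 * k.+1 = (2*k).+1.+1 by lia.
rewrite binS.
have {1}-> : k.+1 = (2*k).+1 - k by lia.
rewrite bin_sub; lia.
Qed.

Lemma hval k n : 0 < k -> k <= n -> n < 2 * k ->
  h (2 * k) n k = 'C(2*k - 1, k - 1).
Proof.
move=> k0 kn n2k.
set e := 2*k - n.
have Hv := Vandermonde e (n-1) (k-1).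
rewrite (_ : e + (n-1) = 2*k-1) in Hv; last by rewrite /e; lia.
rewrite -Hv /h => {Hv}.
have -> : (2 * k - n - 1).+1 = e by rewrite /e; lia.
have -> : (k-1).+1 = k by lia.
rewrite -(big_mkord xpredT (fun j => 'C(e,j) * 'C(n-1, k-1-j))).
have e1 : 1 <= e by rewrite /e; lia.
have ek : e <= k by rewrite /e; lia.
rewrite -/e [in RHS](big_cat_nat _ (n:=e)) //= [in RHS]big_ltn //= subn0 bin0 mul1n.
rewrite (@eq_big_nat _ _ _ 1 e _ (fun j => 'C(e,j) * 'C(n-1, k-1-j))); last first.
  move=> i /andP[i1 ie]; have -> : i < k by lia.
  by rewrite mulnC; congr (_ * 'C(_,_)); lia.
have -> : 'C(n,k) = 'C(n-1,k-1) + \sum_(e <= i < k) 'C(e, i) * 'C(n - 1, k - 1 - i).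
  case: (ltnP k n) => kn'.
    rewrite big_ltn; last by rewrite /e; lia.
    rewrite big_nat big1 ?addn0; last first.
      by move=> i /andP[ei _]; rewrite bin_small ?mul0n.
    rewrite binn mul1n.
    have -> : k - 1 - e = (n-1) - k by rewrite /e; lia.
    rewrite bin_sub; last lia.
    have -> : n = (n-1).+1 by lia.
    have {1}-> : k = (k-1).+1 by lia.
    rewrite binS; have -> : (k-1).+1 = k by lia. by rewrite subSS subn0 addnC.
  have nk : n = k by lia.
  have -> : e = k by rewrite /e; lia.
  rewrite big_geq // addn0 nk binn.
  have -> : k - 1 = k.-1 by lia.
  by rewrite binn.
lia.
Qed.

Lemma upper (T:finType) k (F:{set {set T}}) : #|T| = 2*k -> intersecting F ->
  [forall A in F, #|A|==k] -> 2*#|F| <= 'C(2*k,k).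
Proof.
move=> cT /forallP Hi /forall_inP Hk.
rewrite -cT -card_draws.
set G := [set ~: A | A in F].
have cG : #|G| = #|F| by rewrite card_imset //; apply: setC_inj.
have FG : F :&: G = set0.
  apply/setP => A; rewrite !inE; apply/negP => /andP[AF /imsetP[B BF eAB]].
  have := Hi A; rewrite AF /= => /forall_inP /(_ B BF); rewrite eAB.
  by rewrite setIC setICr eqxx.
have := cardsUI F G; rewrite FG cards0 addn0 cG => e.
have -> : 2 * #|F| = #|F :|: G| by rewrite e; lia.
apply: subset_leq_card; apply/subsetP => A; rewrite !inE => /orP[AF|/imsetP[B BF ->]].
  exact: Hk.
by rewrite cardsCs setCK (eqP (Hk B BF)) cT; apply/eqP; lia.
Qed.

Lemma lower k n : 0 < k -> n < 2 * k ->
  exists F : {set {set 'I_(2*k)}}, mnk_intersecting n k F /\ #|F| = 'C((2*k).-1, k).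
Proof.
move=> k0 n2k.
have xlt : (2*k).-1 < 2*k by lia.
set x := Ordinal xlt.
exists [set A : {set 'I_(2*k)} | A \subset [set~ x] & #|A| == k].
split; last by rewrite cards_draws cardsC1 card_ord.
apply/and3P; split.
- apply/forall_inP => A; rewrite inE => /andP[As /eqP cA].
  apply/forall_inP => B; rewrite inE => /andP[Bs /eqP cB].
  apply/negP => /eqP AB.
  have := cardsUI A B; rewrite AB cards0 addn0 cA cB => e.
  have : #|A :|: B| <= #|[set~ x]| by apply: subset_leq_card; rewrite subUset As Bs.
  rewrite cardsC1 card_ord e; lia.
- apply/forallP => A; apply/implyP => /andP[As cA]; rewrite inE cA andbT.
  apply/subsetP => i iA; rewrite !inE; apply/eqP => ix.
  have := subsetP As i iA; rewrite inE ix /= => h; lia.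
- by apply/forall_inP => A; rewrite inE => /andP[].
Qed.

Theorem proposition5 (k n : nat) :
  0 < k -> k <= n -> n < 2 * k ->
  2 * alpha (2 * k) n k = 'C(2 * k, k) /\ 2 * h (2 * k) n k = 'C(2 * k, k).
Proof.
move=> k0 kn n2k.
have hv := @hval k n k0 kn n2k.
case: k k0 kn n2k hv => [//|k] _ kn n2k hv.
have bc := binC k.
have e1 : (2 * k.+1).-1 = (2*k).+1 by lia.
have e2 : 2 * k.+1 - 1 = (2*k).+1 by lia.
have e3 : 'C((2*k).+1, k.+1) = 'C((2*k).+1, k).
  have {1}-> : k.+1 = (2*k).+1 - k by lia.
  by rewrite bin_sub //; lia.
split; last by rewrite hv e2 subn1 /= bc.
have [F [HF cF]] := lower k.+1 n (ltn0Sn k) n2k.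
have lo : #|F| <= alpha (2 * k.+1) n k.+1 by rewrite /alpha; exact: (@leq_bigmax_cond _ (fun G : {set {set 'I_(2 * k.+1)}} => mnk_intersecting n k.+1 G) (fun G => #|G|) F HF).
have up : alpha (2 * k.+1) n k.+1 <= 'C((2*k).+1, k).
  apply/bigmax_leqP => G HG.
  case/and3P: HG => HG1 _ HG3.
  have := @upper _ _ G (card_ord _) HG1 HG3; rewrite bc leq_mul2l /=; exact.
rewrite cF e1 e3 in lo; rewrite bc; congr (2 * _); apply/eqP; rewrite eqn_leq up.
exact: lo.
Qed.
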